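(* Let $v\ge 0$ and consider the problem $$\min_{y\in\mathbb{R}^{n^+}}\ \sum_{j=1}^{n^+} y_j^{1/\alpha}\quad\text{s.t.}\quad 0\le y_1\le y_2\le\cdots\le y_{n^+},\qquad \sum_{j=1}^{n^+} h^+_j y_j=v .$$ Let $J$ be the transitional index and $S:=\sum_{j'=1}^{J}h^+_{j'}$. Define $$Y:=\frac{v\,S^{\frac{\alpha}{1-\alpha}}}{S^{\frac{1}{1-\alpha}}+J^{\frac{\alpha}{1-\alpha}}\sum_{j'=J+1}^{n^+}(h^+_{j'})^{\frac{1}{1-\alpha}}}\ (\ge 0).$$ Then the optimal solution of this problem is $y^*\in\mathbb{R}^{n^+}$ given by $y^*_j=Y$ for $1\le j\le J$ and $y^*_j=\left(\frac{J h^+_j}{S}\right)^{\frac{\alpha}{1-\alpha}}Y$ for $J+1\le j\le n^+$.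
   Context: Fix $N\in\mathbb{N}$, $\alpha\in(0,1)$ and an integer $1\le n^+\le N$. A function $f:[0,1]\to\mathbb{R}$ is inverse S-shaped if it is strictly increasing, continuously differentiable, and there is $x_0\in[0,1]$ such that $f'$ is strictly decreasing on $[0,x_0]$ and strictly increasing on $[x_0,1]$. Let $W^+:[0,1]\to[0,1]$ be inverse S-shaped with $W^+(0)=0$, $W^+(1)=1$. Decision weights: $h^+_j:=W^+\!\left(\frac{n^+-j+1}{N}\right)-W^+\!\left(\frac{n^+-j}{N}\right)$ for $j=1,\dots,n^+$. The transitional index is $J:=\min\{j\in\{1,\dots,n^+\}: j\,h^+_{j+1}\ge \sum_{j'=1}^{j}h^+_{j'}\}$, with the convention $h^+_{n^++1}=\infty$. *)

(* Defs.v *)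
(* R : realType, real powers via powR (a `^ x),
   with the convention 0 `^ x = 0 for x <> 0. *)
From HB Require Import structures.
From mathcomp Require Import all_boot all_order all_algebra.
From mathcomp Require Import all_classical all_reals all_analysis.
Set Implicit Arguments. Unset Strict Implicit. Unset Printing Implicit Defensive.
Import Order.TTheory GRing.Theory Num.Theory.
Import numFieldNormedType.Exports.
Local Open Scope classical_set_scope.
Local Open Scope ring_scope.

Section Defs.
Variable R : realType.

Definition has_deriv01 (f : R -> R) (x d : R) : Prop :=
  (fun y => (f y - f x) / (y - x)) @ within (`[0, 1] `\ x) (nbhs x) --> d.

Definition inverse_S_shaped (f : R -> R) : Prop :=
  (forall x y, x \in `[0, 1] -> y \in `[0, 1] -> x < y -> f x < f y) /\
  exists f' : R -> R,
    (forall x, x \in `[0, 1] -> has_deriv01 f x (f' x)) /\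
    {within `[0, 1], continuous f'} /\
    exists x0, x0 \in `[0, 1] /\
      (forall x y, x \in `[0, x0] -> y \in `[0, x0] -> x < y -> f' y < f' x) /\
      (forall x y, x \in `[x0, 1] -> y \in `[x0, 1] -> x < y -> f' x < f' y).

Definition hplus (W : R -> R) (N np : nat) (j : nat) : R :=
  W ((np%:R - j%:R + 1) / N%:R) - W ((np%:R - j%:R) / N%:R).

Definition psum (h : nat -> R) (j : nat) : R := \sum_(1 <= i < j.+1) h i.

(* transitional index: the least j in {1..np} with j*h_{j+1} >= sum_{j'<=j} h_j',
   where h_{np+1} = +oo (so the condition always holds at j = np).
   The j-th element (0-based position j-1) of iota 1 np is j. *)
Definition transJ (h : nat -> R) (np : nat) : nat :=
  (find (fun j : nat => (np <= j)%N || (psum h j <= j%:R * h j.+1))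
        (iota 1 np)).+1.

Definition feasible (h : nat -> R) (np : nat) (v : R) (y : nat -> R) : Prop :=
  0 <= y 1%N /\ (forall j, (1 <= j < np)%N -> y j <= y j.+1) /\
  \sum_(1 <= j < np.+1) h j * y j = v.

Definition objective (alpha : R) (np : nat) (y : nat -> R) : R :=
  \sum_(1 <= j < np.+1) y j `^ (1 / alpha).

Definition Yval (alpha v : R) (h : nat -> R) (np J : nat) : R :=
  let S := psum h J in
  v * S `^ (alpha / (1 - alpha)) /
  (S `^ (1 / (1 - alpha)) +
   J%:R `^ (alpha / (1 - alpha)) *
     \sum_(J.+1 <= j < np.+1) h j `^ (1 / (1 - alpha))).

Definition ystar (alpha v : R) (h : nat -> R) (np J : nat) (j : nat) : R :=
  if (j <= J)%N then Yval alpha v h np J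
  else (J%:R * h j / psum h J) `^ (alpha / (1 - alpha)) * Yval alpha v h np J.

End Defs.

(* Main.v *)
Require Import Defs.
From HB Require Import structures.
From mathcomp Require Import all_boot all_order all_algebra.
From mathcomp Require Import all_classical all_reals all_analysis.
Import Order.TTheory GRing.Theory Num.Theory.
Local Open Scope ring_scope.
From mathcomp Require Import ring lra zify.
Import numFieldNormedType.Exports.
Local Open Scope classical_set_scope.
Local Open Scope ring_scope.
Set Implicit Arguments. Unset Strict Implicit.

Section An.
Variable R : realType.

Lemma hd_cont (f : R -> R) x d : has_deriv01 f x d ->
  f @ within (`[0, 1] `\ x) (nbhs x) --> f x.
Proof.
move=> H.
have H2 : (fun y => f x + (f y - f x) / (y - x) * (y - x)) @ within (`[0, 1] `\ x) (nbhs x) --> f x + d * (x - x).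
  apply: cvgD; first exact: cvg_cst.
  apply: cvgM => //; apply: cvgB; last exact: cvg_cst.
  exact: cvg_within.
rewrite subrr mulr0 addr0 in H2.
apply: cvg_trans H2; apply: near_eq_cvg.
rewrite near_withinE; near=> y => -[_ /eqP yx].
by rewrite /= divfK ?subr_eq0 // addrC subrK.
Unshelve. all: by end_near. Qed.

Lemma hd_contW (f : R -> R) (f' : R -> R) :
  (forall x, x \in `[0, 1] -> has_deriv01 f x (f' x)) ->
  {within [set` `[0, 1]], continuous f}.
Proof.
move=> H; apply/subspace_continuousP => x /= x01.
move=> P /= fP.
have := @hd_cont f x (f' x) (H x x01) P fP.
rewrite /= !near_simpl /within /=.
rewrite !near_withinE /= => Hn.
near=> y => Iy.
rewrite /from_subspace /=.
have [yx|yx] := eqVneq y x; first by rewrite yx; exact: nbhs_singleton fP.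
move: Iy yx; near: y; apply: filterS Hn => y Hy Iy yx.
by apply: Hy; split => //; apply/eqP.
Unshelve. all: by end_near. Qed.

Lemma hd_derive (f : R -> R) x d : 0 < x < 1 -> has_deriv01 f x d ->
  is_derive x 1 f d.
Proof.
move=> x01 H.
have Hs : (fun h : R => h + x) @ 0^' --> within (`[0, 1] `\ x) (nbhs x).
  move=> P HP.
  have {}HP : \forall y \near x, (`[0, 1] `\ x) y -> P y := HP.
  change (\forall h \near 0^', P (h + x)).
  have Hx : \forall y \near x, y \in `]0, 1[ by apply: near_in_itvoo; rewrite in_itv.
  have HP' := proj1 (nbhs0P _ _) HP.
  have Hx' := proj1 (nbhs0P _ _) Hx.
  rewrite near_withinE.
  near=> h => h0.
  have Ih : x + h \in `]0, 1[ by near: h.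
  have Hh : (`[0, 1] `\ x) (x + h) -> P (x + h) by near: h.
  rewrite addrC; apply: Hh; split => /=.
    by move: Ih; rewrite !in_itv /= => /andP[/ltW -> /ltW ->].
  by move=> /eqP; rewrite -subr_eq0 addrC addKr; apply/negP.
have Hg : (fun h : R => h^-1 *: ((f \o shift x) (h *: 1) - f x)) @ 0^' --> d.
  have -> : (fun h : R => h^-1 *: ((f \o shift x) (h *: 1) - f x)) =
            (fun y => (f y - f x) / (y - x)) \o (fun h => h + x).
    apply/funext => h /=; rewrite /shift /= [h *: 1]mulr1 addrK mulrC.
    by [].
  exact: cvg_comp Hs H.
apply: DeriveDef; first exact: cvgP Hg.
exact: cvg_lim Hg.
Unshelve. all: by end_near. Qed.

Lemma W_mvt (f f' : R -> R) a b :
  (forall x, x \in `[0, 1] -> has_deriv01 f x (f' x)) ->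
  0 <= a -> a < b -> b <= 1 ->
  exists2 c, a < c < b & f b - f a = f' c * (b - a).
Proof.
move=> H a0 ab b1.
have [c cab E] : exists2 c, c \in `]a, b[ & f b - f a = f' c * (b - a).
  apply: MVT => //.
    move=> x; rewrite in_itv /= => /andP[ax xb].
    apply: hd_derive; last by apply: H; rewrite in_itv /=; apply/andP; split; lra.
    apply/andP; split; lra.
  apply: continuous_subspaceW (hd_contW H).
  move=> y /=; rewrite !in_itv /= => /andP[ay yb]; apply/andP; split; lra.
by exists c => //; move: cab; rewrite in_itv.
Qed.

Lemma valley (f f' : R -> R) x0 a d :
  (forall x, x \in `[0, 1] -> has_deriv01 f x (f' x)) ->
  0 <= x0 <= 1 ->
  (forall x y, x \in `[0, x0] -> y \in `[0, x0] -> x < y -> f' y < f' x) ->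
  (forall x y, x \in `[x0, 1] -> y \in `[x0, 1] -> x < y -> f' x < f' y) ->
  0 <= a -> 0 < d -> a + d + d + d <= 1 ->
  f (a + d) - f a < f (a + d + d) - f (a + d) ->
  f (a + d + d) - f (a + d) < f (a + d + d + d) - f (a + d + d).
Proof.
move=> H /andP[x00 x01] Hdec Hinc a0 d0 a1 H12.
have ea : a + d - a = d by rewrite addrC addKr.
have eb : a + d + d - (a + d) = d by rewrite addrC addKr.
have ec : a + d + d + d - (a + d + d) = d by rewrite addrC addKr.
case: (leP (a + d + d) x0) => hx1.
  have [c1 /andP[c1a c1b] E1] := W_mvt H a0 (ltac:(lra) : a < a + d) (ltac:(lra) : a + d <= 1).
  have [c2 /andP[c2a c2b] E2] := W_mvt H (ltac:(lra) : 0 <= a + d) (ltac:(lra) : a + d < a + d + d) (ltac:(lra) : a + d + d <= 1).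
  have : f' c2 < f' c1.
    apply: Hdec; rewrite ?in_itv /=; try (apply/andP; split); lra.
  move: H12; rewrite E1 E2 ea eb.
  move=> H12 Hc; exfalso.
  have : f' c2 * d < f' c1 * d by rewrite ltr_pM2r.
  lra.
case: (leP x0 (a + d)) => hx2.
  have [c2 /andP[c2a c2b] E2] := W_mvt H (ltac:(lra) : 0 <= a + d) (ltac:(lra) : a + d < a + d + d) (ltac:(lra) : a + d + d <= 1).
  have [c3 /andP[c3a c3b] E3] := W_mvt H (ltac:(lra) : 0 <= a + d + d) (ltac:(lra) : a + d + d < a + d + d + d) (ltac:(lra) : a + d + d + d <= 1).
  have : f' c2 < f' c3.
    apply: Hinc; rewrite ?in_itv /=; try (apply/andP; split); lra.
  rewrite E2 E3 eb ec.
  move=> Hc; by rewrite ltr_pM2r.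
have [c1 /andP[c1a c1b] E1] := W_mvt H a0 (ltac:(lra) : a < a + d) (ltac:(lra) : a + d <= 1).
have [e1 /andP[e1a e1b] F1] := W_mvt H (ltac:(lra) : 0 <= a + d) (ltac:(lra) : a + d < x0) (ltac:(lra) : x0 <= 1).
have [e2 /andP[e2a e2b] F2] := W_mvt H (ltac:(lra) : 0 <= x0) (ltac:(lra) : x0 < a + d + d) (ltac:(lra) : a + d + d <= 1).
have [c3 /andP[c3a c3b] E3] := W_mvt H (ltac:(lra) : 0 <= a + d + d) (ltac:(lra) : a + d + d < a + d + d + d) (ltac:(lra) : a + d + d + d <= 1).
have L1 : f' e1 < f' c1.
  apply: Hdec; rewrite ?in_itv /=; try (apply/andP; split); lra.
have L2 : f' e2 < f' c3.
  apply: Hinc; rewrite ?in_itv /=; try (apply/andP; split); lra.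
have D2 : f (a + d + d) - f (a + d) = f' e1 * (x0 - (a + d)) + f' e2 * (a + d + d - x0).
  by rewrite -F1 -F2; ring.
move: H12; rewrite D2 E1 E3 ea ec.
move=> H12.
have P1 : 0 < x0 - (a + d) by lra.
have P2 : 0 < a + d + d - x0 by lra.
have Q1 : f' e1 * (x0 - (a + d)) < f' c1 * (x0 - (a + d)) by rewrite ltr_pM2r.
have Q2 : f' e2 * (a + d + d - x0) < f' c3 * (a + d + d - x0) by rewrite ltr_pM2r.
rewrite ltNge; apply/negP => H3.
case: (leP (f' c1) (f' c3)) => F13.
  have : (x0 - (a + d)) * f' c1 <= (x0 - (a + d)) * f' c3 by rewrite ler_pM2l.
  lra.
have : (a + d + d - x0) * f' c3 < (a + d + d - x0) * f' c1 by rewrite ltr_pM2l.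
lra.
Qed.
End An.

Section Tan.
Variable R : realType.

Lemma pow_mvt (p s t : R) : 0 < s -> s < t ->
  exists2 c, s < c < t & t `^ p - s `^ p = p * c `^ (p - 1) * (t - s).
Proof.
move=> s0 st.
have [c cst E] : exists2 c, c \in `]s, t[ & t `^ p - s `^ p = p * c `^ (p - 1) * (t - s).
  apply: (MVT (f := fun x => x `^ p) (df := fun c => p * c `^ (p - 1))) => //.
    move=> x; rewrite in_itv /= => /andP[sx xt].
    apply: is_derive1_powR; lra.
  apply: derivable_within_continuous => x; rewrite in_itv /= => /andP[sx xt].
  have : is_derive x 1 (fun z : R => z `^ p) (p * x `^ (p - 1)) by apply: is_derive1_powR; lra.
  by case.
by exists c => //; move: cst; rewrite in_itv.
Qed.

Lemma tangent (p x y : R) : 1 < p -> 0 <= x -> 0 <= y -> x != y ->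
  x `^ p + p * x `^ (p - 1) * (y - x) < y `^ p.
Proof.
move=> p1 x0 y0 xy.
have p10 : p - 1 != 0 by apply/eqP; lra.
have p0 : p != 0 by apply/eqP; lra.
have [xz|xnz] := eqVneq x 0.
  rewrite xz powR0 // powR0 // mulr0 mul0r add0r.
  apply: powR_gt0; rewrite lt_def y0 andbT; move: xy; rewrite xz eq_sym //.
have xp : 0 < x by rewrite lt_def xnz x0.
have [yz|ynz] := eqVneq y 0.
  rewrite yz powR0 //.
  have E : p * x `^ (p - 1) * (0 - x) = - (p * x `^ p).
    by rewrite -(mulr_powRB1 x0 (_ : 0 < p)); [ring | lra].
  rewrite E.
  have : 0 < (p - 1) * x `^ p by apply: mulr_gt0; [lra | apply: powR_gt0].
  lra.
have yp : 0 < y by rewrite lt_def ynz y0.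
case: (ltgtP x y) xy => // [xly|ylx] _.
  have [c /andP[xc cy] E] := pow_mvt p xp xly.
  have : x `^ (p - 1) < c `^ (p - 1).
    apply: (gt0_ltr_powR (ltac:(lra) : 0 < p - 1)); rewrite ?nnegrE; lra.
  move=> Hc.
  have : p * x `^ (p - 1) * (y - x) < p * c `^ (p - 1) * (y - x).
    rewrite ltr_pM2r ?subr_gt0 // ltr_pM2l //; lra.
  lra.
have [c /andP[yc cx] E] := pow_mvt p yp ylx.
have : c `^ (p - 1) < x `^ (p - 1).
  apply: (gt0_ltr_powR (ltac:(lra) : 0 < p - 1)); rewrite ?nnegrE; lra.
move=> Hc.
have : p * c `^ (p - 1) * (x - y) < p * x `^ (p - 1) * (x - y).
  rewrite ltr_pM2r ?subr_gt0 // ltr_pM2l //; lra.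
have : p * x `^ (p - 1) * (y - x) = - (p * x `^ (p - 1) * (x - y)) by ring.
lra.
Qed.
End Tan.

Section Comb.
Variable R : realType.
Implicit Types h e d F : nat -> R.

Lemma abel e d n :
  (forall k, (1 <= k < n)%N -> \sum_(1 <= j < k.+1) e j <= 0) ->
  (forall k, (1 <= k < n)%N -> d k <= d k.+1) ->
  (\sum_(1 <= j < n.+1) e j) * d n <= \sum_(1 <= j < n.+1) e j * d j.
Proof.
elim: n => [|n IH] HP Hd; first by rewrite !big_geq // !mul0r.
have E1 : \sum_(1 <= j < n.+2) e j = \sum_(1 <= j < n.+1) e j + e n.+1 by rewrite big_nat_recr.
have E2 : \sum_(1 <= j < n.+2) e j * d j = \sum_(1 <= j < n.+1) e j * d j + e n.+1 * d n.+1 by rewrite big_nat_recr.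
rewrite E1 E2.
have {}IH : (\sum_(1 <= j < n.+1) e j) * d n <= \sum_(1 <= j < n.+1) e j * d j.
  apply: IH => k /andP[k1 kn]; [apply: HP | apply: Hd]; apply/andP; split => //; lia.
have : (\sum_(1 <= j < n.+1) e j) * (d n.+1 - d n) <= 0.
  case: n {IH E1 E2} HP Hd => [|n] HP Hd.
    by rewrite big_geq // mul0r.
  rewrite -oppr_ge0 -mulNr; apply: mulr_ge0.
    by rewrite oppr_ge0; apply: HP; lia.
  by rewrite subr_ge0; apply: Hd; lia.
move: IH; set P := \sum_(1 <= j < n.+1) e j.
set S := \sum_(1 <= j < n.+1) e j * d j.
move=> IH H1.
have -> : (P + e n.+1) * d n.+1 = P * (d n.+1 - d n) + P * d n + e n.+1 * d n.+1 by ring.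
lra.
Qed.

Lemma sum_ge0_eq0 F n :
  (forall j, (1 <= j <= n)%N -> 0 <= F j) ->
  \sum_(1 <= j < n.+1) F j <= 0 -> forall j, (1 <= j <= n)%N -> F j = 0.
Proof.
elim: n => [|n IH] HF Hs j /andP[j1 jn]; first lia.
move: Hs; rewrite big_nat_recr //= => Hs.
have H0 : 0 <= \sum_(1 <= i < n.+1) F i.
  rewrite big_nat; apply: sumr_ge0 => i /andP[i1 i2]; apply: HF; lia.
have Hn : 0 <= F n.+1 by apply: HF; lia.
have [jn'|jn'] := leqP j n.
  apply: IH => //; [move=> i hi; apply: HF; lia | lra | lia].
have -> : j = n.+1 by lia.
lra.
Qed.

Lemma transJ_props h np : (1 <= np)%N ->
  [/\ (1 <= transJ h np <= np)%N,
      (forall k, (1 <= k < transJ h np)%N -> k%:R * h k.+1 < psum h k) &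
      ((transJ h np < np)%N -> psum h (transJ h np) <= (transJ h np)%:R * h (transJ h np).+1)].
Proof.
move=> np1.
set P := (fun j : nat => (np <= j)%N || (psum h j <= j%:R * h j.+1)).
have EJ : transJ h np = (find P (iota 1 np)).+1 by [].
have hasP : has P (iota 1 np).
  apply/hasP; exists np; first by rewrite mem_iota; lia.
  by rewrite /P leqnn.
have HN := nth_find 0 hasP.
have HB := @before_find _ 0 P (iota 1 np).
have := hasP; rewrite has_find size_iota => Hf.
rewrite EJ.
move: HN HB Hf; set f := find P (iota 1 np) => HN HB Hf.
split.
- lia.
- move=> k /andP[k1 kJ].
  have Hk : (k.-1 < f)%N by lia.
  have := HB _ Hk.
  rewrite nth_iota; last lia.
  rewrite (_ : (1 + k.-1)%N = k); last lia.
  rewrite /P /= => /negbT; rewrite negb_or => /andP[_]; rewrite -ltNge //.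
- move=> Jnp.
  move: HN; rewrite nth_iota // add1n /P /= => /orP[H|H] //.
  exfalso; lia.
Qed.

Lemma avg_mono h J :
  (forall k, (1 <= k < J)%N -> k%:R * h k.+1 < psum h k) ->
  forall k, (1 <= k <= J)%N -> k%:R * psum h J <= J%:R * psum h k.
Proof.
move=> HJ k /andP[k1 kJ].
suff : forall m, (k <= m <= J)%N -> k%:R * psum h m <= m%:R * psum h k.
  by apply; lia.
elim=> [|m IH] /andP[km mJ]; first lia.
have [<-|km'] := eqVneq k m.+1; first by rewrite le_refl.
have {}IH : k%:R * psum h m <= m%:R * psum h k by apply: IH; lia.
have Hm := HJ m (_ : (1 <= m < J)%N).
have {}Hm : m%:R * h m.+1 < psum h m by apply: Hm; lia.
have Ps : psum h m.+1 = psum h m + h m.+1 by rewrite /psum big_nat_recr.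
have m0 : (0 : R) < m%:R by rewrite ltr0n; lia.
have k0 : (0 : R) <= k%:R by rewrite ler0n.
have H1 : m%:R * (k%:R * h m.+1) <= m%:R * psum h k.
  have : k%:R * (m%:R * h m.+1) <= k%:R * psum h m by rewrite ler_wpM2l // ltW.
  have -> : k%:R * (m%:R * h m.+1) = m%:R * (k%:R * h m.+1) by ring.
  lra.
have H2 : k%:R * h m.+1 <= psum h k by rewrite -(ler_pM2l m0).
rewrite Ps -natr1.
have -> : k%:R * (psum h m + h m.+1) = k%:R * psum h m + k%:R * h m.+1 by ring.
have -> : (m%:R + 1) * psum h k = m%:R * psum h k + psum h k by ring.
lra.
Qed.

Lemma chain_lt h a n :
  (forall i, (a <= i < a + n)%N -> h i.+1 < h i) -> (0 < n)%N -> h (a + n)%N < h a.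
Proof.
elim: n => [|n IH] Hc n0; first lia.
case: n IH Hc n0 => [|n] IH Hc _.
  by rewrite addn1; apply: Hc; lia.
have H1 : h (a + n.+1)%N < h a by apply: IH => // i hi; apply: Hc; lia.
have H2 : h (a + n.+1).+1 < h (a + n.+1)%N by apply: Hc; lia.
rewrite addnS; lra.
Qed.

Lemma chain_le h a n :
  (forall i, (a <= i < a + n)%N -> h i <= h i.+1) -> h a <= h (a + n)%N.
Proof.
elim: n => [|n IH] Hc; first by rewrite addn0.
have H1 : h a <= h (a + n)%N by apply: IH => i hi; apply: Hc; lia.
have H2 : h (a + n)%N <= h (a + n).+1 by apply: Hc; lia.
rewrite addnS; lra.
Qed.

Lemma tail_mono h np J :
  (1 <= J <= np)%N ->
  (forall m, (1 <= m)%N -> (m.+2 <= np)%N -> h m.+2 < h m.+1 -> h m.+1 < h m) ->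
  ((J < np)%N -> psum h J <= J%:R * h J.+1) ->
  forall j, (J < j < np)%N -> h j <= h j.+1.
Proof.
move=> /andP[J1 Jnp] Hv HJ j /andP[Jj jnp].
rewrite leNgt; apply/negP => Hj.
have Hdec : forall t, (t < j)%N -> h (j - t).+1 < h (j - t)%N.
  elim=> [|t IH] tj; first by rewrite subn0.
  have := IH (_ : (t < j)%N).
  have -> : (j - t)%N = (j - t.+1).+1 by lia.
  move=> H; apply: Hv => //; [lia | lia | by apply: H; lia].
have Hdec' : forall i, (1 <= i <= j)%N -> h i.+1 < h i.
  by move=> i hi; have := Hdec (j - i)%N (_ : _); rewrite (_ : (j - (j - i))%N = i); [apply; lia | lia].
have Hlt : forall i, (1 <= i <= J)%N -> h J.+1 < h i.
  move=> i hi.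
  have := chain_lt (a := i) (n := (J.+1 - i)%N) (h := h).
  rewrite (_ : (i + (J.+1 - i))%N = J.+1); last lia.
  apply; last lia.
  move=> i' hi'; apply: Hdec'; lia.
have H := HJ (ltac:(lia) : (J < np)%N).
have Hs : J%:R * h J.+1 < psum h J.
  rewrite /psum.
  have -> : J%:R * h J.+1 = \sum_(1 <= i < J.+1) h J.+1.
    by rewrite sumr_const_nat subSS subn0 mulr_natl.
  apply: ltr_sum_nat; first lia.
  move=> i hi; apply: Hlt; lia.
lra.
Qed.
End Comb.


Section W.
Variable R : realType.

Lemma hpos (W : R -> R) N np j : inverse_S_shaped W -> (np <= N)%N -> (1 <= j <= np)%N ->
  0 < hplus W N np j.
Proof.
move=> [Winc _] npN /andP[j1 jnp].
have N0 : (0 : R) < N%:R by rewrite ltr0n; lia.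
have Hj : (1 : R) <= j%:R by rewrite ler1n.
have Hjn : (j%:R : R) <= np%:R by rewrite ler_nat.
have HnN : (np%:R : R) <= N%:R by rewrite ler_nat.
rewrite /hplus subr_gt0; apply: Winc.
- rewrite in_itv /=; apply/andP; split; first by apply: divr_ge0; lra.
  by rewrite ler_pdivrMr // mul1r; lra.
- rewrite in_itv /=; apply/andP; split; first by apply: divr_ge0; lra.
  by rewrite ler_pdivrMr // mul1r; lra.
- by rewrite ltr_pM2r ?invr_gt0 //; lra.
Qed.

Lemma valley_h (W : R -> R) N np m : inverse_S_shaped W -> (np <= N)%N ->
  (1 <= m)%N -> (m.+2 <= np)%N ->
  hplus W N np m.+2 < hplus W N np m.+1 -> hplus W N np m.+1 < hplus W N np m.
Proof.
move=> [_ [f' [Hd [_ [x0 [x0i [Hdec Hinc]]]]]]] npN m1 mnp.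
have N0 : (0 : R) < N%:R by rewrite ltr0n; lia.
have Nn0 : (N%:R : R) != 0 by rewrite gt_eqF.
set a := (np%:R - (m.+2)%:R) / (N%:R : R).
set d := (N%:R : R)^-1.
have E0 : (np%:R - (m.+2)%:R + 1) / N%:R = a + d by rewrite /a /d mulrDl mul1r.
have E1 : (np%:R - (m.+1)%:R) / N%:R = a + d by rewrite /a /d -!natr1; field.
have E2 : (np%:R - (m.+1)%:R + 1) / N%:R = a + d + d by rewrite /a /d -!natr1; field.
have E3 : (np%:R - m%:R) / N%:R = a + d + d by rewrite /a /d -!natr1; field.
have E4 : (np%:R - m%:R + 1) / N%:R = a + d + d + d by rewrite /a /d -!natr1; field.
rewrite /hplus E0 E1 E2 E3 E4 -/a.
apply: (valley Hd _ Hdec Hinc).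
- by move: x0i; rewrite in_itv.
- rewrite /a; apply: divr_ge0; last lra.
  by rewrite subr_ge0 ler_nat.
- by rewrite /d invr_gt0.
- have -> : a + d + d + d = (np%:R - m%:R + 1) / N%:R by rewrite -E4.
  have : (np%:R : R) <= N%:R by rewrite ler_nat.
  have : (1 : R) <= m%:R by rewrite ler1n.
  by rewrite ler_pdivrMr // mul1r; lra.
Qed.

Lemma powRV' (s q : R) : 0 < s -> (s^-1) `^ q = (s `^ q)^-1.
Proof.
move=> s0.
have H : (s^-1) `^ q * s `^ q = 1.
  by rewrite -powRM ?invr_ge0 ?ltW // mulVf ?gt_eqF // powR1.
have Hs : s `^ q != 0 by rewrite gt_eqF // powR_gt0.
by apply: (mulIf Hs); rewrite H mulVf.
Qed.

Lemma psum_gt0 (h : nat -> R) J : (1 <= J)%N -> (forall j, (1 <= j <= J)%N -> 0 < h j) ->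
  0 < psum h J.
Proof.
move=> J1 hp.
have := @ltr_sum_nat R 1 J.+1 (fun=> 0) h (ltac:(lia) : (1 < J.+1)%N).
rewrite sumr_const_nat mul0rn /psum; apply => i hi; apply: hp; lia.
Qed.

Lemma feas_sum (h : nat -> R) np J alpha v : 0 < alpha < 1 -> (1 <= J <= np)%N ->
  (forall j, (1 <= j <= np)%N -> 0 < h j) ->
  \sum_(1 <= j < np.+1) h j * ystar alpha v h np J j = v.
Proof.
move=> /andP[a0 a1] /andP[J1 Jnp] hp.
set q := alpha / (1 - alpha).
set r := 1 / (1 - alpha).
set S := psum h J.
set Y := Yval alpha v h np J.
set T := \sum_(J.+1 <= j < np.+1) h j `^ r.
have Sp : 0 < S by apply: psum_gt0 => // j hj; apply: hp; lia.
have rq : q = r - 1 by rewrite /q /r; field; apply/eqP; lra.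
have r0 : 0 < r by rewrite /r divr_gt0 //; lra.
have J0 : (0 : R) <= J%:R by rewrite ler0n.
rewrite (@big_cat_nat _ _ _ J.+1 1 np.+1 _ _ (ltn0Sn J) Jnp).
rewrite (@eq_big_nat _ _ _ 1 J.+1 _ (fun j => h j * Y)); last first.
  move=> j /andP[_ jJ]; rewrite /ystar -/Y (_ : (j <= J)%N = true) //.
rewrite (@eq_big_nat _ _ _ J.+1 np.+1 _ (fun j => (Y * J%:R `^ q / S `^ q) * h j `^ r)); last first.
  move=> j /andP[jJ jnp]; rewrite /ystar -/Y -/S -/q (_ : (j <= J)%N = false); last lia.
  have hj : 0 < h j by apply: hp; lia.
  have E : (J%:R * h j / S) `^ q = J%:R `^ q * h j `^ q * (S `^ q)^-1.
    rewrite powRM; last by rewrite invr_ge0 ltW.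
      by rewrite powRM // ?ltW // powRV'.
    by apply: mulr_ge0 => //; exact: ltW.
  rewrite E.
  rewrite (_ : h j `^ r = h j * h j `^ q); last by rewrite rq mulr_powRB1 // ltW.
  ring.
rewrite -big_distrl -big_distrr /= -/S -/T.
rewrite /Y /Yval /= -/S -/q -/r -/T.
have Sr : S `^ r = S * S `^ q by rewrite rq mulr_powRB1 // ltW.
rewrite Sr.
have Sq : 0 < S `^ q by apply: powR_gt0.
have T0 : 0 <= T by rewrite /T big_nat; apply: sumr_ge0 => i _; apply: powR_ge0.
have Jq : 0 <= J%:R `^ q by apply: powR_ge0.
have D : 0 < S * S `^ q + J%:R `^ q * T.
  have : 0 < S * S `^ q by apply: mulr_gt0.
  have : 0 <= J%:R `^ q * T by apply: mulr_ge0.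
  lra.
change (\sum_(1 <= i < J.+1) h i) with S.
move: Sq D; clearbody S T; move=> Sq D.
field.
by rewrite !gt_eqF.
Qed.
End W.

Ltac nlia :=
  repeat match goal with
  | H : ?T |- _ =>
     lazymatch T with
     | nat => fail
     | is_true (leq _ _) => fail
     | is_true (andb _ _) => fail
     | @eq nat _ _ => fail
     | _ => clear H
     end
  end; lia.


Theorem theorem1 (R : realType) (N np : nat) (alpha v : R) (W : R -> R) :
  0 < alpha < 1 -> (1 <= np <= N)%N ->
  inverse_S_shaped W -> W 0 = 0 -> W 1 = 1 -> 0 <= v ->
  let h := hplus W N np in
  let J := transJ h np in
  let ys := ystar alpha v h np J in
  [/\ feasible h np v ys,
      forall y, feasible h np v y -> objective alpha np ys <= objective alpha np y
    & forall y, feasible h np v y -> objective alpha np y <= objective alpha np ys ->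
        forall j, (1 <= j <= np)%N -> y j = ys j].
Proof.
move=> /andP[a0 a1] /andP[np1 npN] HW W0 W1 v0 h J ys.
have hp : forall j, (1 <= j <= np)%N -> 0 < h j by move=> j hj; apply: hpos.
have [/andP[J1 Jnp] JP2 JP3] := transJ_props h np1.
rewrite -/J in J1 Jnp JP2 JP3.
have Hv : forall m, (1 <= m)%N -> (m.+2 <= np)%N -> h m.+2 < h m.+1 -> h m.+1 < h m.
  by move=> m m1 m2; apply: valley_h.
have Jmono := tail_mono (ltac:(nlia) : (1 <= J <= np)%N) Hv JP3.
set S := psum h J.
have Sp : 0 < S by apply: psum_gt0 => // j hj; apply: hp; nlia.
have Jge : forall j, (J < j <= np)%N -> S <= J%:R * h j.
  move=> j /andP[Jj jnp].
  have H1 : h J.+1 <= h j.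
    have := @chain_le R h J.+1 (j - J.+1)%N.
    rewrite (_ : (J.+1 + (j - J.+1))%N = j); last nlia.
    apply => i hi; apply: Jmono; nlia.
  have H2 := JP3 (ltac:(nlia) : (J < np)%N).
  have J0 : (0 : R) <= J%:R by rewrite ler0n.
  have : J%:R * h J.+1 <= J%:R * h j by rewrite ler_wpM2l.
  rewrite -/S in H2; lra.
set q := alpha / (1 - alpha).
set p := 1 / alpha.
set Y := Yval alpha v h np J.
have q0 : 0 < q by rewrite /q divr_gt0 //; lra.
have Y0 : 0 <= Y.
  rewrite /Y /Yval /= -/S -/q; apply: divr_ge0; first by apply: mulr_ge0 => //; apply: powR_ge0.
  apply: addr_ge0; first exact: powR_ge0.
  apply: mulr_ge0; first exact: powR_ge0.
  by rewrite big_nat; apply: sumr_ge0 => i _; apply: powR_ge0.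
set c := fun j => (J%:R * h j / S) `^ q.
have cb : forall j, (1 <= j <= np)%N -> 0 <= J%:R * h j / S.
  move=> j hj; apply: divr_ge0; last exact: ltW.
  apply: mulr_ge0; first by rewrite ler0n.
  by apply: ltW; apply: hp.
have ysE : forall j, ys j = if (j <= J)%N then Y else c j * Y by [].
have c1 : forall j, (J < j <= np)%N -> 1 <= c j.
  move=> j hj; rewrite /c.
  have E1 : (1 : R) `^ q = 1 by rewrite powR1.
  rewrite -[leLHS]E1.
  apply: ge0_ler_powR; rewrite ?nnegrE.
  - exact: ltW.
  - by [].
  - by apply: cb; nlia.
  - by rewrite ler_pdivlMr // mul1r; apply: Jge.
have x0 : forall j, 0 <= ys j.
  by move=> j; rewrite ysE; case: ifP => _ //; apply: mulr_ge0 => //; apply: powR_ge0.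
have Feas : feasible h np v ys.
  split; first by apply: x0.
  split.
  - move=> j /andP[j1 jnp]; rewrite !ysE.
    case: (leqP j.+1 J) => hj1.
      by rewrite (_ : (j <= J)%N = true) //; nlia.
    case: (leqP j J) => hj.
      rewrite -[X in X <= _]mul1r; apply: ler_wpM2r => //; apply: c1; nlia.
    apply: ler_wpM2r => //; rewrite /c.
    apply: ge0_ler_powR; rewrite ?nnegrE.
    + exact: ltW.
    + by apply: cb; nlia.
    + by apply: cb; nlia.
    + apply: ler_wpM2r; first by rewrite invr_ge0 ltW.
      apply: ler_wpM2l; first by rewrite ler0n.
      apply: Jmono; nlia.
  - apply: feas_sum; [by apply/andP; split | by apply/andP; split | exact: hp].
have [_ [_ xsum]] := Feas.
clearbody ys Y J h.
have p1 : 1 < p by rewrite /p ltr_pdivlMr // mul1r.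
have qp : q * (p - 1) = 1 by rewrite /q /p; field; apply/andP; split; apply/eqP; lra.
set Yp := Y `^ (p - 1).
have Yp0 : 0 <= Yp by rewrite /Yp; exact: powR_ge0.
have xpE : forall j, (1 <= j <= np)%N -> ys j `^ (p - 1) = if (j <= J)%N then Yp else (J%:R * h j / S) * Yp.
  move=> j hj; rewrite ysE; case: ifP => // hjJ.
  rewrite powRM //; last by apply: powR_ge0.
  by rewrite /c -powRrM qp powRr1 //; apply: cb.
have KEY : forall y, feasible h np v y -> 0 <= \sum_(1 <= j < np.+1) ys j `^ (p - 1) * (y j - ys j).
  move=> y [y1 [ymono ysum]].
  have hd0 : \sum_(1 <= j < np.+1) h j * (y j - ys j) = 0.
    rewrite (@eq_big_nat _ _ _ 1 np.+1 _ (fun j => h j * y j - h j * ys j)); last by move=> j _; ring.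
    by rewrite sumrB ysum xsum subrr.
  rewrite (@big_cat_nat _ _ _ J.+1 1 np.+1 _ _ (ltn0Sn J) Jnp) in hd0.
  rewrite (@big_cat_nat _ _ _ J.+1 1 np.+1 _ _ (ltn0Sn J) Jnp).
  set B1 := \sum_(1 <= j < J.+1) h j * (y j - ys j) in hd0.
  set B2 := \sum_(J.+1 <= j < np.+1) h j * (y j - ys j) in hd0.
  set A := \sum_(1 <= j < J.+1) (y j - Y).
  have E1 : \sum_(1 <= j < J.+1) ys j `^ (p - 1) * (y j - ys j) = Yp * A.
    rewrite /A mulr_sumr; apply: eq_big_nat => j /andP[j1 jJ].
    by rewrite xpE; [rewrite ysE (_ : (j <= J)%N = true) | nlia].
  have E2 : \sum_(J.+1 <= j < np.+1) ys j `^ (p - 1) * (y j - ys j) = (Yp * J%:R / S) * B2.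
    rewrite /B2 mulr_sumr; apply: eq_big_nat => j /andP[j1 jJ].
    rewrite xpE; last nlia.
    by rewrite (_ : (j <= J)%N = false); [ring | nlia].
  have B1E : B1 = \sum_(1 <= j < J.+1) h j * (y j - Y).
    by rewrite /B1; apply: eq_big_nat => j /andP[j1 jJ]; rewrite ysE (_ : (j <= J)%N = true) //; nlia.
  have HA : 0 <= \sum_(1 <= j < J.+1) (S - J%:R * h j) * (y j - Y).
    have := @abel R (fun j => S - J%:R * h j) (fun j => y j - Y) J.
    have PE : forall k, \sum_(1 <= j < k.+1) (S - J%:R * h j) = S *+ k - J%:R * psum h k.
      by move=> k; rewrite sumrB sumr_const_nat subSS subn0 -big_distrr.
    have HPJ : \sum_(1 <= j < J.+1) (S - J%:R * h j) = 0 by rewrite PE -/S mulrC mulr_natr subrr.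
    rewrite HPJ mul0r.
    apply.
    - move=> k hk; rewrite PE subr_le0 -[S *+ k]mulr_natl.
      by apply: avg_mono => //; nlia.
    - move=> k hk; rewrite lerD2r; apply: ymono; nlia.
  have HAE : \sum_(1 <= j < J.+1) (S - J%:R * h j) * (y j - Y) = S * A - J%:R * B1.
    rewrite B1E /A !mulr_sumr -sumrB; apply: eq_big_nat => j _; ring.
  rewrite HAE in HA.
  rewrite E1 E2.
  change (0 <= Yp * A + Yp * J%:R / S * B2).
  have hd0' : B1 + B2 = 0 := hd0.
  have -> : Yp * A + Yp * J%:R / S * B2 = (Yp / S) * (S * A - J%:R * B1).
    have -> : B2 = - B1 by lra.
    field; by rewrite gt_eqF.
  apply: mulr_ge0 => //; apply: divr_ge0 => //; exact: ltW.
have Hslack : forall y, feasible h np v y ->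
  [/\ forall j, (1 <= j <= np)%N -> 0 <= y j `^ p - (ys j `^ p + p * ys j `^ (p - 1) * (y j - ys j)),
      forall j, (1 <= j <= np)%N -> y j != ys j -> 0 < y j `^ p - (ys j `^ p + p * ys j `^ (p - 1) * (y j - ys j)) &
      \sum_(1 <= j < np.+1) (y j `^ p - (ys j `^ p + p * ys j `^ (p - 1) * (y j - ys j)))
        <= objective alpha np y - objective alpha np ys].
  move=> y Fy.
  have ypos : forall j, (1 <= j <= np)%N -> 0 <= y j.
    case: Fy => y1 [ymono _].
    elim=> [|j IH] hj; first nlia.
    case: j IH hj => [|j] IH hj //.
    apply: le_trans (ymono j.+1 _); [apply: IH | ]; nlia.
  have T2 : forall j, (1 <= j <= np)%N -> y j != ys j -> 0 < y j `^ p - (ys j `^ p + p * ys j `^ (p - 1) * (y j - ys j)).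
    move=> j hj hne; rewrite subr_gt0; apply: (tangent p1 (x0 j) (ypos j hj)); by rewrite eq_sym.
  split => //.
  - move=> j hj; have [e|ne] := eqVneq (y j) (ys j).
      by rewrite e subrr mulr0 addr0 subrr.
    exact/ltW/T2.
  - have K := KEY y Fy.
    have -> : \sum_(1 <= j < np.+1) (y j `^ p - (ys j `^ p + p * ys j `^ (p - 1) * (y j - ys j))) =
      objective alpha np y - objective alpha np ys - p * \sum_(1 <= j < np.+1) ys j `^ (p - 1) * (y j - ys j).
      rewrite /objective -/p mulr_sumr -!sumrB; apply: eq_big_nat => j _; ring.
    have : 0 <= p * \sum_(1 <= j < np.+1) ys j `^ (p - 1) * (y j - ys j) by apply: mulr_ge0 => //; lra.
    lra.
split => //.
- move=> y Fy; have [H1 _ H3] := Hslack y Fy.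
  have : 0 <= \sum_(1 <= j < np.+1) (y j `^ p - (ys j `^ p + p * ys j `^ (p - 1) * (y j - ys j))).
    by rewrite big_nat; apply: sumr_ge0 => j hj; apply: H1; nlia.
  lra.
- move=> y Fy Hle j hj; have [H1 H2 H3] := Hslack y Fy.
  have Hz := sum_ge0_eq0 H1 (_ : _ <= 0) hj.
  apply/eqP; apply/negP => /negP hne.
  have := H2 j hj hne; rewrite Hz ?ltxx //; lra.
Qed.
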